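(* Let $A=\sum_{j=1}^\infty E_j$, where $E_j$ are rank-one projections and the series converges in the strong operator topology. Let $\xi$ be a sequence whose entries consist of the entries of $\mu=\langle\mu_j\rangle_{j=1}^M$ and of $1-\lambda=\langle1-\lambda_j\rangle_{j=1}^N$ ($0\le M\le\infty$, $N=\infty$), where $0<\mu_j\le\frac12$ and $0<\lambda_j<\frac12$. If $\sum_{j=1}^\infty\lambda_j=\infty$, then $\xi\in\operatorname{Adm}(A)$.
   Context: $\operatorname{Adm}(A)$ is the set of sequences $\xi\in\ell^\infty_+$ such that $A=\sum_j\xi_jP_j$ for some rank-one projections $P_j$ (series converging in the strong operator topology if infinite); admissibility is invariant under permutation of the sequence. *)

(* Defs.v *)
From Stdlib Require Import Reals.
Open Scope R_scope.

Record C := mkC { re : R; im : R }.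
Definition Cadd (a b : C) : C := mkC (re a + re b) (im a + im b).
Definition Cmul (a b : C) : C :=
  mkC (re a * re b - im a * im b) (re a * im b + im a * re b).
Definition Cconj (a : C) : C := mkC (re a) (- im a).
Definition RtoC (r : R) : C := mkC r 0.

(** A complex Hilbert space (inner product linear in the first variable). *)
Record HilbertSpace := {
  vec :> Type;
  vzero : vec;
  vadd : vec -> vec -> vec;
  vopp : vec -> vec;
  vscal : C -> vec -> vec;
  inner : vec -> vec -> C;
  vadd_comm : forall x y, vadd x y = vadd y x;
  vadd_assoc : forall x y z, vadd x (vadd y z) = vadd (vadd x y) z;
  vadd_0 : forall x, vadd x vzero = x;
  vadd_opp : forall x, vadd x (vopp x) = vzero;
  vscal_1 : forall x, vscal (RtoC 1) x = x;
  vscal_assoc : forall a b x, vscal a (vscal b x) = vscal (Cmul a b) x;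
  vscal_addv : forall a x y, vscal a (vadd x y) = vadd (vscal a x) (vscal a y);
  vscal_adds : forall a b x, vscal (Cadd a b) x = vadd (vscal a x) (vscal b x);
  inner_add : forall x y z, inner (vadd x y) z = Cadd (inner x z) (inner y z);
  inner_scal : forall a x y, inner (vscal a x) y = Cmul a (inner x y);
  inner_conj : forall x y, inner y x = Cconj (inner x y);
  inner_pos : forall x, 0 <= re (inner x x);
  inner_def : forall x, inner x x = RtoC 0 -> x = vzero;
  complete : forall u : nat -> vec,
    (forall eps, 0 < eps -> exists N, forall m n, (N <= m)%nat -> (N <= n)%nat ->
        sqrt (re (inner (vadd (u m) (vopp (u n))) (vadd (u m) (vopp (u n))))) < eps) ->
    exists l, forall eps, 0 < eps -> exists N, forall n, (N <= n)%nat ->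
        sqrt (re (inner (vadd (u n) (vopp l)) (vadd (u n) (vopp l)))) < eps
}.

Arguments vzero {h}.
Arguments vadd {h}.
Arguments vopp {h}.
Arguments vscal {h}.
Arguments inner {h}.

Definition vnorm {H : HilbertSpace} (x : H) : R := sqrt (re (inner x x)).

Definition vlim {H : HilbertSpace} (u : nat -> H) (l : H) : Prop :=
  forall eps, 0 < eps -> exists N, forall n, (N <= n)%nat ->
    vnorm (vadd (u n) (vopp l)) < eps.

Fixpoint vpsum {H : HilbertSpace} (f : nat -> H) (n : nat) : H :=
  match n with
  | O => vzero
  | S k => vadd (vpsum f k) (f k)
  end.

Definition rank_one_proj {H : HilbertSpace} (P : H -> H) : Prop :=
  exists e : H, vnorm e = 1 /\ forall v, P v = vscal (inner v e) e.

Definition sot_sum {H : HilbertSpace} (c : nat -> R) (P : nat -> H -> H) (A : H -> H) : Prop :=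
  forall v, vlim (fun n => vpsum (fun j => vscal (RtoC (c j)) (P j v)) n) (A v).

Definition Adm {H : HilbertSpace} (A : H -> H) (xi : nat -> R) : Prop :=
  (forall j, 0 <= xi j) /\ (exists B, forall j, xi j <= B) /\
  exists P : nat -> H -> H, (forall j, rank_one_proj (P j)) /\ sot_sum xi P A.

(** Index set {j : j < M} of mu, with M = None standing for M = infinity. *)
Definition inM (M : option nat) (j : nat) : Prop :=
  match M with Some m => (j < m)%nat | None => True end.

(** xi consists of the entries of mu and of 1 - lambda (each exactly once),
    via a bijection sigma : nat -> (indices of mu) + (indices of lambda). *)
Definition merged (M : option nat) (mu lambda : nat -> R)
  (sigma : nat -> {j : nat | inM M j} + nat) (xi : nat -> R) : Prop :=
  (forall a b, sigma a = sigma b -> a = b) /\ (forall y, exists n, sigma n = y) /\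
  forall n, xi n = match sigma n with
                   | inl j => mu (proj1_sig j)
                   | inr j => 1 - lambda j
                   end.

(* Main.v *)
Require Import Defs.
From Stdlib Require Import Reals Lra Psatz Classical ClassicalEpsilon Arith.
Import Defs.
Open Scope R_scope.


Arguments vadd_comm {h}.
Arguments vadd_assoc {h}.
Arguments vadd_0 {h}.
Arguments vadd_opp {h}.
Arguments vscal_1 {h}.
Arguments vscal_assoc {h}.
Arguments vscal_addv {h}.
Arguments vscal_adds {h}.
Arguments inner_add {h}.
Arguments inner_scal {h}.
Arguments inner_conj {h}.
Arguments inner_pos {h}.
Arguments inner_def {h}.

Lemma Ceq (a b : C) : re a = re b -> im a = im b -> a = b.
Proof. destruct a, b; simpl; intros -> ->; reflexivity. Qed.

Ltac csolve := apply Ceq; unfold Cmul, Cadd, Cconj, RtoC; simpl; try ring; try lra; try nra.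

Section HS.
Context {H : HilbertSpace}.

Lemma inner_swap (x y : H) : inner x y = Cconj (inner y x).
Proof. apply inner_conj. Qed.

Lemma inner_add_r (x y z : H) : inner x (vadd y z) = Cadd (inner x y) (inner x z).
Proof.
  rewrite (inner_swap x (vadd y z)), inner_add, (inner_swap x y), (inner_swap x z).
  csolve.
Qed.

Lemma inner_scal_r a (x y : H) : inner x (vscal a y) = Cmul (Cconj a) (inner x y).
Proof.
  rewrite (inner_swap x (vscal a y)), inner_scal, (inner_swap x y). csolve.
Qed.

Lemma inner_scal_rR r (x y : H) : inner x (vscal (RtoC r) y) = Cmul (RtoC r) (inner x y).
Proof. rewrite inner_scal_r. f_equal. csolve. Qed.

Lemma vscal_sum a b (x : H) : vadd (vscal a x) (vscal b x) = vscal (Cadd a b) x.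
Proof. rewrite vscal_adds; reflexivity. Qed.

Lemma vadd_cancel (x y z : H) : vadd x y = vadd x z -> y = z.
Proof.
  intro E.
  assert (E2 : vadd (vopp x) (vadd x y) = vadd (vopp x) (vadd x z)) by (rewrite E; reflexivity).
  rewrite !vadd_assoc, (vadd_comm (vopp x) x), vadd_opp in E2.
  rewrite !(vadd_comm vzero), !vadd_0 in E2. exact E2.
Qed.

Lemma vscal_0 (x : H) : vscal (RtoC 0) x = vzero.
Proof.
  apply (vadd_cancel (vscal (RtoC 0) x)).
  rewrite vscal_sum, vadd_0. f_equal. csolve.
Qed.

Lemma vscal_zero_r a : vscal a (@vzero H) = vzero.
Proof.
  apply (vadd_cancel (vscal a vzero)).
  rewrite <- vscal_addv, !vadd_0. reflexivity.
Qed.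

Lemma inner_zero_r (x : H) : inner x vzero = RtoC 0.
Proof.
  rewrite <- (vscal_0 vzero), inner_scal_r. csolve.
Qed.

Lemma inner_zero_l (x : H) : inner vzero x = RtoC 0.
Proof.
  rewrite <- (vscal_0 vzero), inner_scal. csolve.
Qed.

Lemma vopp_scal (x : H) : vopp x = vscal (RtoC (-1)) x.
Proof.
  apply (vadd_cancel x). rewrite vadd_opp.
  rewrite <- (vscal_0 x). symmetry.
  transitivity (vadd (vscal (RtoC 1) x) (vscal (RtoC (-1)) x)); [rewrite vscal_1; reflexivity|].
  rewrite vscal_sum. f_equal. csolve.
Qed.

Lemma re_inner_sym (x y : H) : re (inner y x) = re (inner x y).
Proof. rewrite inner_conj. reflexivity. Qed.

Lemma im_inner_self (x : H) : im (inner x x) = 0.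
Proof. pose proof (inner_conj x x) as E. apply (f_equal im) in E. simpl in E. lra. Qed.

End HS.


Definition nrm2 {H : HilbertSpace} (x : H) := re (inner x x).
Definition cnorm2 (z : C) := re z * re z + im z * im z.

Section HS2.
Context {H : HilbertSpace}.

Lemma nrm2_pos (x : H) : 0 <= nrm2 x.
Proof. apply inner_pos. Qed.

Lemma nrm2_comb a b (x y : H) :
  nrm2 (vadd (vscal (RtoC a) x) (vscal (RtoC b) y)) =
  a*a*nrm2 x + 2*a*b*re (inner x y) + b*b*nrm2 y.
Proof.
  unfold nrm2.
  rewrite !inner_add, !inner_add_r, !inner_scal, !inner_scal_rR.
  pose proof (re_inner_sym x y). pose proof (im_inner_self x). pose proof (im_inner_self y).
  unfold Cmul, Cadd, RtoC; simpl. nra.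
Qed.

Lemma nrm2_scal a (x : H) : nrm2 (vscal a x) = cnorm2 a * nrm2 x.
Proof.
  unfold nrm2, cnorm2. rewrite inner_scal, inner_scal_r.
  pose proof (im_inner_self x). unfold Cmul, Cconj; simpl. nra.
Qed.

Lemma nrm2_vopp (x : H) : nrm2 (vopp x) = nrm2 x.
Proof. rewrite vopp_scal, nrm2_scal. unfold cnorm2, RtoC; simpl. ring. Qed.

Lemma CS_re (x y : H) : re (inner x y) * re (inner x y) <= nrm2 x * nrm2 y.
Proof.
  assert (Ht : forall t, 0 <= nrm2 x + 2*t*re (inner x y) + t*t*nrm2 y).
  { intro t. pose proof (nrm2_pos (vadd (vscal (RtoC 1) x) (vscal (RtoC t) y))).
    rewrite nrm2_comb in H0. nra. }
  set (a := nrm2 x) in *. set (b := re (inner x y)) in *. set (c := nrm2 y) in *.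
  assert (0 <= a) by apply nrm2_pos. assert (0 <= c) by apply nrm2_pos.
  destruct (Req_dec c 0) as [Hc|Hc].
  - rewrite Hc. destruct (Req_dec b 0) as [Hb|Hb]. { rewrite Hb. nra. }
    specialize (Ht (-(a+1)/(2*b))). rewrite Hc in Ht.
    replace (2 * (- (a + 1) / (2 * b)) * b) with (-(a+1)) in Ht by (field; auto). nra.
  - specialize (Ht (-b/c)).
    replace (a + 2 * (- b / c) * b + - b / c * (- b / c) * c) with (a - b*b/c) in Ht by (field; auto).
    assert (b*b/c <= a) by lra.
    apply (Rmult_le_compat_r c) in H2; [|lra].
    replace (b*b/c*c) with (b*b) in H2 by (field; auto). lra.
Qed.

Lemma CS_re_abs (x y : H) : Rabs (re (inner x y)) <= vnorm x * vnorm y.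
Proof.
  unfold vnorm. rewrite <- sqrt_mult_alt by apply inner_pos.
  rewrite <- (sqrt_square (Rabs (re (inner x y)))) at 1 by apply Rabs_pos. apply sqrt_le_1_alt.
  pose proof (CS_re x y). unfold nrm2 in H0.
  rewrite <- Rabs_mult, Rabs_right by nra. exact H0.
Qed.

Lemma vnorm_pos (x : H) : 0 <= vnorm x.
Proof. apply sqrt_pos. Qed.

Lemma vnorm_sq (x : H) : vnorm x * vnorm x = nrm2 x.
Proof. apply sqrt_sqrt, inner_pos. Qed.

Lemma vnorm_tri (x y : H) : vnorm (vadd x y) <= vnorm x + vnorm y.
Proof.
  assert (E : nrm2 (vadd x y) <= (vnorm x + vnorm y) * (vnorm x + vnorm y)).
  { replace (vadd x y) with (vadd (vscal (RtoC 1) x) (vscal (RtoC 1) y)) by (rewrite !vscal_1; reflexivity).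
    rewrite nrm2_comb. pose proof (CS_re_abs x y). pose proof (vnorm_sq x). pose proof (vnorm_sq y).
    pose proof (Rle_abs (re (inner x y))). nra. }
  unfold vnorm at 1. rewrite <- (sqrt_square (vnorm x + vnorm y)).
  - apply sqrt_le_1_alt. exact E.
  - pose proof (vnorm_pos x); pose proof (vnorm_pos y); lra.
Qed.

Lemma vnorm_vopp (x : H) : vnorm (vopp x) = vnorm x.
Proof. unfold vnorm. fold (nrm2 (vopp x)). rewrite nrm2_vopp. reflexivity. Qed.

End HS2.


Section HS3.
Context {H : HilbertSpace}.

Lemma cnorm2_pos z : 0 <= cnorm2 z.
Proof. unfold cnorm2; nra. Qed.

Lemma rank1_rescale (h : H) x : 0 < x -> nrm2 h = x ->
  exists u, vnorm u = 1 /\ forall v, vscal (RtoC x) (vscal (inner v u) u) = vscal (inner v h) h.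
Proof.
  intros Hx Hh. set (k := / sqrt x).
  assert (Hs : sqrt x * sqrt x = x) by (apply sqrt_sqrt; lra).
  assert (Hsp : 0 < sqrt x) by (apply sqrt_lt_R0; lra).
  assert (Hk : x * k * k = 1).
  { transitivity ((sqrt x * sqrt x) * k * k); [rewrite Hs; ring|]. unfold k; field; lra. }
  exists (vscal (RtoC k) h). split.
  - unfold vnorm. fold (nrm2 (vscal (RtoC k) h)). rewrite nrm2_scal, Hh.
    unfold cnorm2, RtoC; simpl. replace ((k*k+0*0)*x) with (x*k*k) by ring. rewrite Hk. apply sqrt_1.
  - intro v. rewrite inner_scal_rR, !vscal_assoc. f_equal.
    set (z := inner v h).
    assert (E1 : x*k*k*re z = re z) by (rewrite Hk; ring).
    assert (E2 : x*k*k*im z = im z) by (rewrite Hk; ring).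
    apply Ceq; unfold Cmul, RtoC; simpl; lra.
Qed.

Definition lc (g e : H) p q := vadd (vscal p g) (vscal q e).

Lemma vscal_lc a (g e : H) p q : vscal a (lc g e p q) = lc g e (Cmul a p) (Cmul a q).
Proof. unfold lc. rewrite vscal_addv, !vscal_assoc. reflexivity. Qed.

Lemma lc_add (g e : H) p q p' q' : vadd (lc g e p q) (lc g e p' q') = lc g e (Cadd p p') (Cadd q q').
Proof.
  unfold lc. rewrite <- !vscal_sum.
  rewrite !vadd_assoc. f_equal. rewrite <- !vadd_assoc. f_equal. apply vadd_comm.
Qed.

Lemma inner_lcR v (g e : H) p q :
  inner v (lc g e (RtoC p) (RtoC q)) = Cadd (Cmul (RtoC p) (inner v g)) (Cmul (RtoC q) (inner v e)).
Proof. unfold lc. rewrite inner_add_r, !inner_scal_rR. reflexivity. Qed.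

Lemma emit_step (g : H) c x : nrm2 g = c -> 0 < x <= c ->
  exists u g', vnorm u = 1 /\ nrm2 g' = c - x /\
   (forall v, vadd (vscal (RtoC x) (vscal (inner v u) u)) (vscal (inner v g') g') = vscal (inner v g) g) /\
   (forall v, cnorm2 (inner v g') <= cnorm2 (inner v g)).
Proof.
  intros Hg Hx.
  set (r1 := sqrt (x/c)). set (r2 := sqrt ((c-x)/c)).
  assert (H1 : r1*r1 = x/c) by (apply sqrt_sqrt; unfold Rdiv; apply Rmult_le_pos; [lra|apply Rlt_le, Rinv_0_lt_compat; lra]).
  assert (H2 : r2*r2 = (c-x)/c) by (apply sqrt_sqrt; unfold Rdiv; apply Rmult_le_pos; [lra|apply Rlt_le, Rinv_0_lt_compat; lra]).
  assert (H12 : r1*r1 + r2*r2 = 1) by (rewrite H1, H2; field; lra).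
  assert (H2le : r2*r2 <= 1) by (pose proof (Rle_0_sqr r1); unfold Rsqr in *; lra).
  destruct (rank1_rescale (vscal (RtoC r1) g) x) as [u [Hu Huv]]; [lra| |].
  { rewrite nrm2_scal, Hg. unfold cnorm2, RtoC; simpl. replace ((r1*r1+0*0)*c) with (r1*r1*c) by ring.
    rewrite H1. field. lra. }
  exists u, (vscal (RtoC r2) g). split; [exact Hu|]. split; [|split].
  - rewrite nrm2_scal, Hg. unfold cnorm2, RtoC; simpl. replace ((r2*r2+0*0)*c) with (r2*r2*c) by ring.
    rewrite H2. field. lra.
  - intro v. rewrite Huv, !inner_scal_rR, !vscal_assoc, vscal_sum. f_equal.
    set (z := inner v g).
    assert (E1 : (r1*r1+r2*r2)*re z = re z) by (rewrite H12; ring).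
    assert (E2 : (r1*r1+r2*r2)*im z = im z) by (rewrite H12; ring).
    apply Ceq; unfold Cmul, Cadd, RtoC; simpl; lra.
  - intro v. rewrite inner_scal_rR. unfold cnorm2, Cmul, RtoC; simpl.
    pose proof (cnorm2_pos (inner v g)). unfold cnorm2 in H0.
    set (a := re (inner v g)) in *. set (b := im (inner v g)) in *.
    assert (E: (r2*a - 0*b)*(r2*a-0*b) + (r2*b+0*a)*(r2*b+0*a) = (r2*r2)*(a*a+b*b)) by ring.
    rewrite E. nra.
Qed.

Lemma cont_f c K x : continuity (fun t => c*cos t*cos t + sin t*sin t + 2*K*cos t*sin t - x).
Proof.
  intros t. repeat (apply continuity_pt_minus || apply continuity_pt_plus || apply continuity_pt_mult
   || apply continuity_cos || apply continuity_sin || apply continuity_pt_const); try (intros ? ?; reflexivity).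
Qed.

End HS3.


Section HS4.
Context {H : HilbertSpace}.

Lemma sq_ineq p q A B t : p*p = 1 - t -> q*q = t -> 0 < t -> t <= 1 ->
  (p*A+q*B)*(p*A+q*B) <= (1 - t/2)*(A*A) + 3*(B*B).
Proof.
  intros Hp Hq Ht Ht1.
  pose proof (Rle_0_sqr (t/2*p*A - q*B)) as K. unfold Rsqr in K.
  assert (K2 : t/2*((p*A+q*B)*(p*A+q*B)) <= t/2*((1+t/2)*(p*p)*(A*A)) + (t/2+1)*(q*q)*(B*B)) by lra.
  rewrite Hp, Hq in K2.
  assert (K3 : (p*A+q*B)*(p*A+q*B) <= (1+t/2)*(1-t)*(A*A) + (1+2/t)*t*(B*B)).
  { apply (Rmult_le_reg_l (t/2)); [lra|].
    replace (t / 2 * ((1 + t / 2) * (1 - t) * (A * A) + (1 + 2 / t) * t * (B * B)))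
      with (t/2*((1+t/2)*(1-t)*(A*A)) + (t/2+1)*t*(B*B)) by (field; lra). lra. }
  replace ((1+2/t)*t) with (t+2) in K3 by (field; lra).
  assert (0 <= A*A) by nra. assert (0 <= B*B) by nra. nra.
Qed.

Lemma mix_step (g e : H) c x : nrm2 g = c -> nrm2 e = 1 -> 0 <= c < x -> x < 1 ->
  exists u g' t, vnorm u = 1 /\ nrm2 g' = c + 1 - x /\ 1 - x <= t <= 1 /\
   (forall v, vadd (vscal (RtoC x) (vscal (inner v u) u)) (vscal (inner v g') g')
              = vadd (vscal (inner v g) g) (vscal (inner v e) e)) /\
   (forall v, cnorm2 (inner v g') <= (1 - t/2) * cnorm2 (inner v g) + 3 * cnorm2 (inner v e)).
Proof.
  intros Hg He Hc Hx.
  set (R0 := re (inner g e)).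
  set (s := if Rle_dec 0 R0 then 1 else -1).
  assert (Hs : s*s = 1) by (unfold s; destruct (Rle_dec 0 R0); lra).
  assert (HK : 0 <= s*R0) by (unfold s; destruct (Rle_dec 0 R0); lra).
  destruct (IVT _ 0 (PI/2) (cont_f c (s*R0) x)) as [z [[Hz0 Hz1] Hz]].
  - pose proof PI2_RGT_0; lra.
  - rewrite cos_0, sin_0. lra.
  - rewrite cos_PI2, sin_PI2. lra.
  - set (p := cos z). set (q := s * sin z).
    assert (Hcs : cos z * cos z + sin z * sin z = 1) by (pose proof (sin2_cos2 z); unfold Rsqr in *; lra).
    assert (Hpq : p*p + q*q = 1) by (unfold p, q; nra).
    assert (Hp0 : 0 <= p) by (apply cos_ge_0; pose proof PI2_RGT_0; lra).
    assert (Hsn : 0 <= sin z) by (apply sin_ge_0; pose proof PI2_RGT_0; pose proof PI_RGT_0; lra).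
    assert (Hx1 : nrm2 (lc g e (RtoC p) (RtoC q)) = x).
    { unfold lc. rewrite nrm2_comb, Hg, He. fold R0. unfold q.
      replace (s * sin z * (s * sin z)) with ((s*s) * (sin z * sin z)) by ring. rewrite Hs. unfold p. lra. }
    assert (Hx2 : nrm2 (lc g e (RtoC (-q)) (RtoC p)) = c + 1 - x).
    { unfold lc. rewrite nrm2_comb, Hg, He. fold R0.
      unfold lc in Hx1. rewrite nrm2_comb, Hg, He in Hx1. fold R0 in Hx1.
      assert (E : (p*p+q*q)*c = c) by (rewrite Hpq; ring). lra. }
    assert (Ht : 1 - x <= p*p).
    { rewrite <- Hx1. unfold lc. rewrite nrm2_comb, Hg, He. fold R0. unfold q.
      replace (s * sin z * (s * sin z)) with ((s*s) * (sin z * sin z)) by ring. rewrite Hs.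
      assert (0 <= p * (s*R0) * sin z) by (apply Rmult_le_pos; [apply Rmult_le_pos|]; lra).
      assert (0 <= p*p*c) by (apply Rmult_le_pos; [apply Rle_0_sqr|lra]).
      assert (E : sin z * sin z = 1 - p*p) by (unfold p; lra). rewrite E. lra. }
    destruct (rank1_rescale (lc g e (RtoC p) (RtoC q)) x) as [u [Hu Huv]]; [lra|exact Hx1|].
    exists u, (lc g e (RtoC (-q)) (RtoC p)), (p*p).
    split; [exact Hu|]. split; [exact Hx2|]. split; [split; [exact Ht| nra]|]. split.
    + intro v. rewrite Huv, !inner_lcR, !vscal_lc, lc_add. unfold lc. f_equal; f_equal.
      * set (a := inner v g). set (b := inner v e).
        assert (E1 : (p*p+q*q)*re a = re a) by (rewrite Hpq; ring).
        assert (E2 : (p*p+q*q)*im a = im a) by (rewrite Hpq; ring).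
        apply Ceq; unfold Cmul, Cadd, RtoC; simpl; lra.
      * set (a := inner v g). set (b := inner v e).
        assert (E1 : (p*p+q*q)*re b = re b) by (rewrite Hpq; ring).
        assert (E2 : (p*p+q*q)*im b = im b) by (rewrite Hpq; ring).
        apply Ceq; unfold Cmul, Cadd, RtoC; simpl; lra.
    + intro v. rewrite inner_lcR. unfold cnorm2, Cmul, Cadd, RtoC; simpl.
      assert (Htp : 0 < p*p) by lra.
      assert (Hqq : (-q)*(-q) = 1 - p*p) by lra.
      pose proof (sq_ineq (-q) p (re (inner v g)) (re (inner v e)) (p*p) Hqq eq_refl Htp ltac:(pose proof (Rle_0_sqr q); unfold Rsqr in *; lra)).
      pose proof (sq_ineq (-q) p (im (inner v g)) (im (inner v e)) (p*p) Hqq eq_refl Htp ltac:(pose proof (Rle_0_sqr q); unfold Rsqr in *; lra)).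
      replace (- q * re (inner v g) - 0 * im (inner v g) + (p * re (inner v e) - 0 * im (inner v e)))
        with (-q * re (inner v g) + p * re (inner v e)) by ring.
      replace (- q * im (inner v g) + 0 * re (inner v g) + (p * im (inner v e) + 0 * re (inner v e)))
        with (-q * im (inner v g) + p * im (inner v e)) by ring.
      lra.
Qed.

End HS4.


Section Seq.
Context {H : HilbertSpace} (e : nat -> H) (xi : nat -> R).

Definition Inv (st : H * R * nat) := nrm2 (fst (fst st)) = snd (fst st) /\ 0 <= snd (fst st) < 1.

Definition Spec (st : H*R*nat) (x : R) (out : H * (H*R*nat) * R) : Prop :=
  let g := fst (fst st) in let c := snd (fst st) in let m := snd st in
  let u := fst (fst out) in let st' := snd (fst out) in let t := snd out in
  let g' := fst (fst st') in let c' := snd (fst st') in let m' := snd st' in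
  vnorm u = 1 /\ Inv st' /\ 0 <= t <= 1 /\
  ((m' = m /\ t = 0 /\ c' = c - x /\
    (forall v, vadd (vscal (RtoC x) (vscal (inner v u) u)) (vscal (inner v g') g') = vscal (inner v g) g) /\
    (forall v, cnorm2 (inner v g') <= cnorm2 (inner v g)))
  \/ (m' = S m /\ 1 - x <= t /\ c' = c + 1 - x /\
    (forall v, vadd (vscal (RtoC x) (vscal (inner v u) u)) (vscal (inner v g') g')
        = vadd (vscal (inner v g) g) (vscal (inner v (e m)) (e m))) /\
    (forall v, cnorm2 (inner v g') <= (1 - t/2) * cnorm2 (inner v g) + 3 * cnorm2 (inner v (e m))))).

Hypothesis He : forall j, nrm2 (e j) = 1.

Lemma step_ex st x : exists out, Inv st -> 0 < x < 1 -> Spec st x out.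
Proof.
  destruct st as [[g c] m].
  destruct (classic (Inv ((g,c),m) /\ 0 < x < 1)) as [[HI Hx]|HN].
  2:{ exists (vzero, ((vzero, 0), O), 0). intros; exfalso; tauto. }
  destruct HI as [Hg Hc]. simpl in Hg, Hc.
  destruct (Rle_dec x c) as [Hxc|Hxc].
  - destruct (emit_step g c x Hg ltac:(lra)) as [u [g' [Hu [Hg' [Hid Hb]]]]].
    exists (u, ((g', c - x), m), 0). intros _ _. unfold Spec, Inv; simpl.
    split; [exact Hu|]. split; [split; [exact Hg'|lra]|]. split; [lra|].
    left. repeat split; auto.
  - destruct (mix_step g (e m) c x Hg (He m) ltac:(lra) ltac:(lra)) as [u [g' [t [Hu [Hg' [Ht [Hid Hb]]]]]]].
    exists (u, ((g', c + 1 - x), S m), t). intros _ _. unfold Spec, Inv; simpl.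
    split; [exact Hu|]. split; [split; [exact Hg'|lra]|]. split; [lra|].
    right. repeat split; auto; lra.
Qed.

Definition stepf st x := proj1_sig (constructive_indefinite_description _ (step_ex st x)).

Lemma stepf_spec st x : Inv st -> 0 < x < 1 -> Spec st x (stepf st x).
Proof. unfold stepf. destruct constructive_indefinite_description as [o Ho]. exact Ho. Qed.

Fixpoint stseq (n : nat) : H*R*nat :=
  match n with O => ((vzero, 0), O) | S k => snd (fst (stepf (stseq k) (xi k))) end.

Definition useq n := fst (fst (stepf (stseq n) (xi n))).
Definition tseq n := snd (stepf (stseq n) (xi n)).
Definition gseq n := fst (fst (stseq n)).
Definition cseq n := snd (fst (stseq n)).
Definition mseq n := snd (stseq n).

Hypothesis Hxi : forall n, 0 < xi n < 1.

Lemma inv_all n : Inv (stseq n).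
Proof.
  induction n.
  - unfold Inv; simpl. unfold nrm2. rewrite inner_zero_r. simpl. lra.
  - simpl. destruct (stepf_spec _ _ IHn (Hxi n)) as [_ [HI _]]. exact HI.
Qed.

Lemma spec_all n : Spec (stseq n) (xi n) (stepf (stseq n) (xi n)).
Proof. apply stepf_spec; [apply inv_all|apply Hxi]. Qed.

End Seq.


Fixpoint psum (f : nat -> R) (n : nat) : R :=
  match n with O => 0 | S k => psum f k + f k end.

Lemma psum_mono f n m : (forall k, 0 <= f k) -> (n <= m)%nat -> psum f n <= psum f m.
Proof.
  intros Hf Hnm. induction Hnm; [lra|]. simpl. pose proof (Hf m). lra.
Qed.

Lemma psum_nonneg f n : (forall k, 0 <= f k) -> 0 <= psum f n.
Proof. intros Hf. apply (psum_mono f 0 n Hf). lia. Qed.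

Lemma psum_ge_term f n i : (forall k, 0 <= f k) -> (i < n)%nat -> f i <= psum f n.
Proof.
  intros Hf Hi.
  pose proof (psum_mono f (S i) n Hf Hi). simpl in H. pose proof (psum_nonneg f i Hf). lra.
Qed.

Lemma psum_le f g n : (forall k, f k <= g k) -> psum f n <= psum g n.
Proof. intros Hfg. induction n; simpl; [lra|]. pose proof (Hfg n). lra. Qed.

Lemma psum_plus f g n : psum (fun k => f k + g k) n = psum f n + psum g n.
Proof. induction n; simpl; lra. Qed.

Lemma psum_telescope (d : nat -> R) n : psum (fun k => d (S k) - d k) n = d n - d O.
Proof. induction n; simpl; lra. Qed.

Lemma conv0 (x tau D : nat -> R) :
  (forall n, 0 <= x n) -> (forall n, 0 <= tau n <= 1) ->
  (forall n, D n <= D (S n)) -> (exists B, forall n, D n <= B) ->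
  (forall n, x (S n) <= (1 - tau n) * x n + (D (S n) - D n)) ->
  (forall B, exists n, B <= psum tau n) ->
  forall eps, 0 < eps -> exists N, forall n, (N <= n)%nat -> x n < eps.
Proof.
  intros Hx Ht HD [B HB] Hrec Hdiv eps Heps.
  destruct (growing_cv D HD) as [l Hl].
  { exists B. intros y [n ->]. apply HB. }
  assert (HDl : forall n, D n <= l) by (apply growing_ineq; auto).
  destruct (Hl (eps/2) ltac:(lra)) as [N1 HN1].
  assert (Hmain : forall k, x (k + N1)%nat <= x N1 / (1 + (psum tau (k+N1) - psum tau N1)) + (D (k+N1)%nat - D N1)).
  { induction k.
    - simpl. replace (1 + (psum tau N1 - psum tau N1)) with 1 by ring. unfold Rdiv. rewrite Rinv_1. lra.
    - set (T := psum tau (k+N1) - psum tau N1) in *.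
      assert (HT : 0 <= T) by (unfold T; pose proof (psum_mono tau N1 (k+N1) (fun j => proj1 (Ht j)) ltac:(lia)); lra).
      replace (S k + N1)%nat with (S (k + N1)) by lia.
      replace (psum tau (S (k+N1)) - psum tau N1) with (T + tau (k+N1)%nat) by (unfold T; simpl; ring).
      specialize (Hrec (k+N1)%nat). destruct (Ht (k+N1)%nat) as [Ht0 Ht1].
      set (a := tau (k+N1)%nat) in *. set (X := x N1) in *.
      assert (HX : 0 <= X) by apply Hx.
      assert (Hq : (1 - a) * (X / (1 + T)) <= X / (1 + (T + a))).
      { unfold Rdiv. apply (Rmult_le_reg_r ((1+T)*(1+(T+a)))); [nra|].
        replace ((1 - a) * (X * / (1 + T)) * ((1 + T) * (1 + (T + a)))) with ((1-a)*X*(1+(T+a))) by (field; lra).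
        replace (X * / (1 + (T + a)) * ((1 + T) * (1 + (T + a)))) with (X*(1+T)) by (field; lra).
        assert (0 <= X*(a*T + a*a)) by (apply Rmult_le_pos; [lra|]; apply Rplus_le_le_0_compat; apply Rmult_le_pos; lra). lra. }
      assert (0 <= x (k+N1)%nat) by apply Hx.
      assert (Hm : (1 - a) * x (k+N1)%nat <= (1-a) * (X / (1 + T) + (D (k + N1)%nat - D N1))) by (apply Rmult_le_compat_l; lra).
      assert (0 <= D (k + N1)%nat - D N1).
      { clear -HD. induction k; simpl; [lra|]. specialize (HD (k+N1)%nat). lra. }
      nra. }
  destruct (Hdiv (psum tau N1 + 2 * x N1 / eps)) as [n0 Hn0].
  exists (max n0 N1). intros n Hn.
  specialize (Hmain (n - N1)%nat). replace (n - N1 + N1)%nat with n in Hmain by lia.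
  assert (HDn : D n - D N1 < eps/2).
  { specialize (HN1 N1 ltac:(lia)). unfold R_dist in HN1. apply Rabs_def2 in HN1.
    pose proof (HDl n). lra. }
  assert (Hp : psum tau n0 <= psum tau n) by (apply psum_mono; [intro j; apply Ht|lia]).
  set (T := psum tau n - psum tau N1) in *.
  assert (HT : 2 * x N1 / eps <= T) by (unfold T; lra).
  assert (HX : 0 <= x N1) by apply Hx.
  assert (x N1 / (1 + T) < eps / 2).
  { unfold Rdiv in *. apply (Rmult_lt_reg_r (1+T)).
    { assert (0 <= 2 * x N1 * / eps) by (apply Rmult_le_pos; [lra|apply Rlt_le, Rinv_0_lt_compat; lra]). lra. }
    replace (x N1 * / (1 + T) * (1 + T)) with (x N1) by (field; assert (0 <= 2 * x N1 * / eps) by (apply Rmult_le_pos; [lra|apply Rlt_le, Rinv_0_lt_compat; lra]); lra).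
    assert (2 * x N1 * / eps * eps = 2 * x N1) by (field; lra).
    nra. }
  lra.
Qed.


Section Anal.
Context {H : HilbertSpace} (e : nat -> H) (xi : nat -> R).
Hypothesis He : forall j, nrm2 (e j) = 1.
Hypothesis Hxi : forall n, 0 < xi n < 1.

Notation gs := (gseq e xi He).
Notation cs := (cseq e xi He).
Notation ms := (mseq e xi He).
Notation us := (useq e xi He).
Notation ts := (tseq e xi He).

Lemma facts n :
  vnorm (us n) = 1 /\ nrm2 (gs n) = cs n /\ 0 <= cs n < 1 /\ 0 <= ts n <= 1 /\
  ((ms (S n) = ms n /\ ts n = 0 /\ cs (S n) = cs n - xi n /\
    (forall v, vadd (vscal (RtoC (xi n)) (vscal (inner v (us n)) (us n))) (vscal (inner v (gs (S n))) (gs (S n))) = vscal (inner v (gs n)) (gs n)) /\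
    (forall v, cnorm2 (inner v (gs (S n))) <= cnorm2 (inner v (gs n))))
  \/ (ms (S n) = S (ms n) /\ 1 - xi n <= ts n /\ cs (S n) = cs n + 1 - xi n /\
    (forall v, vadd (vscal (RtoC (xi n)) (vscal (inner v (us n)) (us n))) (vscal (inner v (gs (S n))) (gs (S n)))
        = vadd (vscal (inner v (gs n)) (gs n)) (vscal (inner v (e (ms n))) (e (ms n)))) /\
    (forall v, cnorm2 (inner v (gs (S n))) <= (1 - ts n/2) * cnorm2 (inner v (gs n)) + 3 * cnorm2 (inner v (e (ms n)))))).
Proof.
  pose proof (spec_all e xi He Hxi n) as S. pose proof (inv_all e xi He Hxi n) as [I1 I2].
  unfold Spec in S. exact (conj (proj1 S) (conj I1 (conj I2 (proj2 (proj2 S))))).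
Qed.

Definition Sv v n := vpsum (fun j => vscal (RtoC (xi j)) (vscal (inner v (us j)) (us j))) n.
Definition Tv v m := vpsum (fun j => vscal (RtoC 1) (vscal (inner v (e j)) (e j))) m.

Lemma vec_inv v n : vadd (Sv v n) (vscal (inner v (gs n)) (gs n)) = Tv v (ms n).
Proof.
  induction n.
  - unfold Sv, Tv. simpl. unfold gseq, mseq; simpl. rewrite vscal_zero_r, vadd_0. reflexivity.
  - destruct (facts n) as [_ [_ [_ [_ [[Hm [_ [_ [Hid _]]]]|[Hm [_ [_ [Hid _]]]]]]]]].
    + unfold Sv in *. simpl. rewrite Hm, <- IHn, <- vadd_assoc, Hid. reflexivity.
    + unfold Sv, Tv in *. simpl. rewrite Hm. simpl. rewrite <- IHn, <- vadd_assoc, Hid, vscal_1.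
      rewrite vadd_assoc. reflexivity.
Qed.

Definition Dm v m := psum (fun j => cnorm2 (inner v (e j))) m.

Lemma ms_mono n : (ms n <= ms (S n))%nat.
Proof. destruct (facts n) as [_ [_ [_ [_ [[Hm _]|[Hm _]]]]]]; lia. Qed.

Lemma ms_mono' n k : (ms n <= ms (k + n))%nat.
Proof. induction k; simpl; [lia|]. pose proof (ms_mono (k+n)). lia. Qed.

Lemma x2_rec v n : cnorm2 (inner v (gs (S n))) <=
  (1 - ts n / 2) * cnorm2 (inner v (gs n)) + (3 * Dm v (ms (S n)) - 3 * Dm v (ms n)).
Proof.
  destruct (facts n) as [_ [_ [_ [_ [[Hm [Ht [_ [_ Hb]]]]|[Hm [_ [_ [_ Hb]]]]]]]]].
  - rewrite Hm, Ht. specialize (Hb v). lra.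
  - rewrite Hm. unfold Dm. simpl. specialize (Hb v). lra.
Qed.

Definition wf n := if Rlt_dec (1/2) (xi n) then 1 - xi n else 0.

Lemma w_step n : wf n <= 2 * ts n + cs n - cs (S n).
Proof.
  unfold wf. pose proof (Hxi n).
  destruct (facts n) as [_ [_ [_ [_ [[Hm [Ht [Hc _]]]|[Hm [Ht [Hc _]]]]]]]];
  destruct (Rlt_dec (1/2) (xi n)); lra.
Qed.

Lemma cs0 : cs O = 0.
Proof. reflexivity. Qed.

Lemma w_sum n : psum wf n <= 2 * psum ts n.
Proof.
  assert (forall n, psum wf n <= 2 * psum ts n + cs O - cs n).
  { induction n0; simpl; [rewrite cs0; lra|]. pose proof (w_step n0). lra. }
  pose proof (H0 n). rewrite cs0 in H1. destruct (facts n) as [_ [_ [Hc _]]]. lra.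
Qed.

Lemma m_ge n : psum ts n <= INR (ms n).
Proof.
  induction n; simpl; [unfold mseq; simpl; lra|].
  destruct (facts n) as [_ [_ [_ [Ht [[Hm [Ht0 _]]|[Hm _]]]]]].
  - rewrite Hm. lra.
  - rewrite Hm, S_INR. lra.
Qed.

Hypothesis Wdiv : forall B, exists n, B <= psum wf n.

Lemma ts_div B : exists n, B <= psum (fun k => ts k / 2) n.
Proof.
  destruct (Wdiv (4*B)) as [n Hn]. exists n. pose proof (w_sum n).
  assert (psum (fun k => ts k / 2) n = psum ts n / 2).
  { clear. induction n; simpl; [lra|]. rewrite IHn. lra. }
  lra.
Qed.

Lemma ms_div M : exists N, forall n, (N <= n)%nat -> (M <= ms n)%nat.
Proof.
  destruct (ts_div (INR M)) as [N HN]. exists N. intros n Hn.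
  assert (psum (fun k => ts k / 2) N <= psum ts N).
  { apply psum_le. intro k. destruct (facts k) as [_ [_ [_ [Ht _]]]]. lra. }
  pose proof (m_ge N). pose proof (ms_mono' N (n - N)). replace (n - N + N)%nat with n in H2 by lia.
  apply INR_le. apply le_INR in H2. lra.
Qed.

Lemma x2_conv v : (exists B, forall m, Dm v m <= B) ->
  forall eps, 0 < eps -> exists N, forall n, (N <= n)%nat -> cnorm2 (inner v (gs n)) < eps.
Proof.
  intros [B HB].
  apply (conv0 (fun n => cnorm2 (inner v (gs n))) (fun k => ts k / 2) (fun n => 3 * Dm v (ms n))).
  - intro; apply cnorm2_pos.
  - intro k. destruct (facts k) as [_ [_ [_ [Ht _]]]]. lra.
  - intro n. assert (Dm v (ms n) <= Dm v (ms (S n))).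
    { apply psum_mono; [intro; apply cnorm2_pos|apply ms_mono]. } lra.
  - exists (3*B). intro n. specialize (HB (ms n)). lra.
  - intro n. pose proof (x2_rec v n). replace (1 - ts n / 2) with (1 - ts n / 2) by ring. exact H0.
  - apply ts_div.
Qed.

End Anal.


Lemma vpsum_ext {H : HilbertSpace} (f g : nat -> H) n : (forall j, f j = g j) -> vpsum f n = vpsum g n.
Proof. intro E. induction n; simpl; [reflexivity|]. rewrite IHn, E. reflexivity. Qed.

Lemma grp1 {H : HilbertSpace} (x a : H) : vadd (vadd x (vopp a)) a = x.
Proof.
  rewrite <- vadd_assoc, (vadd_comm (vopp a) a), vadd_opp, vadd_0. reflexivity.
Qed.

Lemma grp2 {H : HilbertSpace} (S G y : H) : vadd (vadd (vadd S G) y) (vopp G) = vadd S y.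
Proof.
  rewrite <- (vadd_assoc S G y), (vadd_comm G y), (vadd_assoc S y G), <- vadd_assoc, vadd_opp, vadd_0.
  reflexivity.
Qed.

Section Fin.
Context {H : HilbertSpace} (e : nat -> H) (xi : nat -> R).
Hypothesis He : forall j, nrm2 (e j) = 1.
Hypothesis Hxi : forall n, 0 < xi n < 1.

Lemma re_Tv v m : re (inner (Tv e v m) v) = Dm e v m.
Proof.
  induction m; unfold Tv, Dm in *; simpl.
  - rewrite inner_zero_l. reflexivity.
  - rewrite inner_add. simpl. rewrite IHm, vscal_1, inner_scal, (inner_conj (e m) v).
    unfold cnorm2, Cmul, Cconj; simpl. ring.
Qed.

Lemma Dm_bounded (A : H -> H) v : vlim (Tv e v) (A v) -> exists B, forall m, Dm e v m <= B.
Proof.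
  intros HA. destruct (HA 1 ltac:(lra)) as [M HM].
  exists ((1 + vnorm (A v)) * vnorm v).
  assert (Hge : forall m, (M <= m)%nat -> Dm e v m <= (1 + vnorm (A v)) * vnorm v).
  { intros m Hm. rewrite <- re_Tv. eapply Rle_trans; [apply Rle_abs|].
    eapply Rle_trans; [apply CS_re_abs|]. apply Rmult_le_compat_r; [apply vnorm_pos|].
    rewrite <- (grp1 (Tv e v m) (A v)). eapply Rle_trans; [apply vnorm_tri|].
    specialize (HM m Hm). lra. }
  intro m. destruct (le_lt_dec M m) as [Hm|Hm]; [auto|].
  eapply Rle_trans; [|apply (Hge M); lia].
  apply psum_mono; [intro; apply cnorm2_pos|lia].
Qed.

Hypothesis Wdiv : forall B, exists n, B <= psum (wf xi) n.

Lemma final_conv (A : H -> H) v : vlim (Tv e v) (A v) -> vlim (Sv e xi He v) (A v).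
Proof.
  intros HA eps Heps.
  destruct (x2_conv e xi He Hxi Wdiv v (Dm_bounded A v HA) ((eps/2)*(eps/2)) ltac:(nra)) as [N1 HN1].
  destruct (HA (eps/2) ltac:(lra)) as [M HM].
  destruct (ms_div e xi He Hxi Wdiv M) as [N2 HN2].
  exists (max N1 N2). intros n Hn.
  pose proof (vec_inv e xi He Hxi v n) as Hv.
  set (G := vscal (inner v (gseq e xi He n)) (gseq e xi He n)) in *.
  rewrite <- (grp2 (Sv e xi He v n) G (vopp (A v))), Hv.
  eapply Rle_lt_trans; [apply vnorm_tri|]. rewrite vnorm_vopp.
  assert (H1 : vnorm (vadd (Tv e v (mseq e xi He n)) (vopp (A v))) < eps/2) by (apply HM, HN2; lia).
  assert (H2 : vnorm G < eps/2).
  { unfold G, vnorm. fold (nrm2 (vscal (inner v (gseq e xi He n)) (gseq e xi He n))).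
    rewrite nrm2_scal. destruct (facts e xi He Hxi n) as [_ [Hg [Hc _]]]. rewrite Hg.
    specialize (HN1 n ltac:(lia)). pose proof (cnorm2_pos (inner v (gseq e xi He n))).
    rewrite <- (sqrt_square (eps/2)) by lra. apply sqrt_lt_1_alt. split; [nra|].
    assert (cnorm2 (inner v (gseq e xi He n)) * cseq e xi He n <= cnorm2 (inner v (gseq e xi He n))) by nra.
    lra. }
  lra.
Qed.

End Fin.


Lemma W_unb (M : option nat) (lambda : nat -> R) (sigma : nat -> {j : nat | inM M j} + nat) (xi : nat -> R)
  (Hlam : forall j, 0 < lambda j < 1/2)
  (Hdiv : cv_infty (fun n => sum_f_R0 lambda n))
  (Hsurj : forall y, exists n, sigma n = y)
  (Hxv : forall n, (0 < xi n < 1) /\ (forall j, sigma n = inr j -> xi n = 1 - lambda j)) :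
  forall B, exists n, B <= psum (wf xi) n.
Proof.
  set (fJ := fun J k => match sigma k with inr j => if le_dec j J then lambda j else 0 | inl _ => 0 end).
  assert (Hf0 : forall J k, 0 <= fJ J k).
  { intros J k. unfold fJ. destruct (sigma k); [lra|]. destruct (le_dec n J); [pose proof (Hlam n)|]; lra. }
  assert (Hfw : forall J k, fJ J k <= wf xi k).
  { intros J k. unfold fJ, wf. destruct (Hxv k) as [Hx0 Hx1]. destruct (sigma k) eqn:Es.
    - destruct (Rlt_dec (1/2) (xi k)); lra.
    - rewrite (Hx1 n eq_refl). pose proof (Hlam n).
      destruct (Rlt_dec (1/2) (1 - lambda n)); [|lra]. destruct (le_dec n J); lra. }
  assert (HB : forall J, exists N, sum_f_R0 lambda J <= psum (fJ J) N).
  { induction J.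
    - destruct (Hsurj (inr 0%nat)) as [n0 Hn0]. exists (S n0).
      eapply Rle_trans; [|apply (psum_ge_term _ _ n0 (Hf0 0%nat)); lia].
      unfold fJ. rewrite Hn0. simpl. lra.
    - destruct IHJ as [N HN]. destruct (Hsurj (inr (S J))) as [n1 Hn1].
      set (h := fun k => match sigma k with inr j => if Nat.eq_dec j (S J) then lambda j else 0 | inl _ => 0 end).
      assert (Hh0 : forall k, 0 <= h k).
      { intro k. unfold h. destruct (sigma k); [lra|]. destruct (Nat.eq_dec n (S J)); [pose proof (Hlam n)|]; lra. }
      assert (Hsplit : forall k, fJ (S J) k = fJ J k + h k).
      { intro k. unfold fJ, h. destruct (sigma k); [lra|].
        destruct (le_dec n (S J)), (le_dec n J), (Nat.eq_dec n (S J)); try lia; lra. }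
      exists (max N (S n1)).
      assert (E : psum (fJ (S J)) (max N (S n1)) = psum (fJ J) (max N (S n1)) + psum h (max N (S n1))).
      { rewrite <- psum_plus. clear -Hsplit. induction (max N (S n1)); simpl; [lra|]. rewrite IHn, Hsplit. lra. }
      rewrite E. change (sum_f_R0 lambda (S J)) with (sum_f_R0 lambda J + lambda (S J)).
      assert (psum (fJ J) N <= psum (fJ J) (max N (S n1))) by (apply psum_mono; [apply Hf0|lia]).
      assert (h n1 <= psum h (max N (S n1))) by (apply psum_ge_term; [apply Hh0|lia]).
      assert (h n1 = lambda (S J)) by (unfold h; rewrite Hn1; destruct (Nat.eq_dec (S J) (S J)); [reflexivity|lia]). lra. }
  intro B. destruct (Hdiv B) as [N0 HN0]. specialize (HN0 N0 (Nat.le_refl _)).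
  destruct (HB N0) as [N HN]. exists N.
  pose proof (psum_le _ _ N (Hfw N0)). lra.
Qed.

Theorem lemma3p5 (H : HilbertSpace) (A : H -> H) (E : nat -> H -> H)
  (HE : forall j, rank_one_proj (E j))
  (HA : sot_sum (fun _ => 1) E A)
  (M : option nat) (mu lambda : nat -> R)
  (Hmu : forall j, inM M j -> 0 < mu j <= 1/2)
  (Hlam : forall j, 0 < lambda j < 1/2)
  (Hdiv : cv_infty (fun n => sum_f_R0 lambda n))
  (sigma : nat -> {j : nat | inM M j} + nat) (xi : nat -> R)
  (Hxi : merged M mu lambda sigma xi) :
  Adm A xi.
Proof.
  destruct Hxi as [Hinj [Hsurj Hval]].
  assert (Hxr : forall n, 0 < xi n < 1).
  { intro n. rewrite Hval. destruct (sigma n) as [[j Hj]|j]; simpl.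
    - pose proof (Hmu j Hj); lra.
    - pose proof (Hlam j); lra. }
  set (e := fun j => proj1_sig (constructive_indefinite_description _ (HE j))).
  assert (Hee : forall j, vnorm (e j) = 1 /\ forall v, E j v = vscal (inner v (e j)) (e j)).
  { intro j. unfold e. destruct constructive_indefinite_description as [x Hx]. exact Hx. }
  assert (He : forall j, nrm2 (e j) = 1).
  { intro j. destruct (Hee j) as [Hn _]. rewrite <- vnorm_sq, Hn. ring. }
  assert (Wdiv : forall B, exists n, B <= psum (wf xi) n).
  { apply (W_unb M lambda sigma xi Hlam Hdiv Hsurj). intro n. split; [apply Hxr|].
    intros j Hj. rewrite Hval, Hj. reflexivity. }
  split; [intro j; pose proof (Hxr j); lra|].
  split; [exists 1; intro j; pose proof (Hxr j); lra|].
  exists (fun j v => vscal (inner v (useq e xi He j)) (useq e xi He j)).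
  split.
  - intro j. exists (useq e xi He j). split; [|reflexivity].
    destruct (facts e xi He Hxr j) as [Hu _]. exact Hu.
  - intro v. apply (final_conv e xi He Hxr Wdiv A v).
    unfold Tv. intros eps Heps. destruct (HA v eps Heps) as [N HN]. exists N. intros n Hn.
    specialize (HN n Hn). rewrite (vpsum_ext _ (fun j => vscal (RtoC 1) (vscal (inner v (e j)) (e j)))) in HN.
    + exact HN.
    + intro j. destruct (Hee j) as [_ Hj]. rewrite Hj. reflexivity.
Qed.
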